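(* Let $A=(Q,R,F_A)$ be an RNNA, regarded as the coalgebra $c\colon Q\to G\mathcal{P}_{\mathsf{ufs}}Q=2\times(\mathcal{P}_{\mathsf{ufs}}Q)^{\mathbb{A}}\times[\mathbb{A}]\mathcal{P}_{\mathsf{ufs}}Q$, $c(q)=(f(q),\,a\mapsto\{q':q\xrightarrow{a}q'\},\,\langle a\rangle\{q':q\xrightarrow{\mathord{|}a}q'\})$ with $f(q)=1$ iff $q\in F_A$ and $a$ fresh for $q$. Let $c^\sharp\colon\mathcal{P}_{\mathsf{ufs}}Q\to G\mathcal{P}_{\mathsf{ufs}}Q$ be its determinization, $c^\sharp(S)=(\max_{s\in S}f(s),\,a\mapsto\bigcup_{s\in S}\{q':s\xrightarrow{a}q'\},\,\langle a\rangle\bigcup_{s\in S}\{q':s\xrightarrow{\mathord{|}a}q'\})$ with $a$ fresh for $S$, let $h$ be the unique $G$-coalgebra homomorphism from $(\mathcal{P}_{\mathsf{ufs}}Q,c^\sharp)$ to the terminal $G$-coalgebra $(\mathcal{P}_{\mathsf{fs}}(\overline{\mathbb{A}}^*/{=_\alpha}),\tau)$, and let $\ddagger c(q)=h(\{q\})$. Then for every state $q$, $\ddagger c(q)$ is the bar language accepted by $q$.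
   Context: Fix a countably infinite set $\mathbb{A}$ of names; $\mathsf{Nom}$: nominal sets and equivariant maps; $\mathrm{supp}$ least support, ''fresh'' means not in the support. $[\mathbb{A}]X=(\mathbb{A}\times X)/\sim$, $(a,x)\sim(b,y)$ iff $(a\,c)\cdot x=(b\,c)\cdot y$ for fresh $c$, classes $\langle a\rangle x$. $\mathcal{P}_{\mathsf{fs}}$, $\mathcal{P}_{\mathsf{ufs}}$: finitely / uniformly finitely supported ($\bigcup_{x\in A}\mathrm{supp}(x)$ finite) subsets. $GX=2\times X^{\mathbb{A}}\times[\mathbb{A}]X$, $2=\{0,1\}$. Bar strings: words over $\overline{\mathbb{A}}=\mathbb{A}\cup\{\mathord{|}a:a\in\mathbb{A}\}$; $=_\alpha$ the least equivalence with $x\,\mathord{|}a\,v=_\alpha x\,\mathord{|}b\,w$ whenever $\langle a\rangle v=\langle b\rangle w$ (i.e. $a=b,v=w$, or $b$ fresh for $v$ and $(a\,b)\cdot v=w$), classes $[w]_\alpha$. The terminal $G$-coalgebra has carrier $\mathcal{P}_{\mathsf{fs}}(\overline{\mathbb{A}}^*/{=_\alpha})$ and $\tau(S)=(b,a\mapsto\{[w]_\alpha:[aw]_\alpha\in S\},\langle a\rangle\{[w]_\alpha:[\mathord{|}a\,w]_\alpha\in S\})$, $b=1$ iff $[\varepsilon]_\alpha\in S$, $a$ fresh for $S$. An RNNA $(Q,R,F_A)$: orbit-finite nominal set $Q$, equivariant $R\subseteq Q\times\overline{\mathbb{A}}\times Q$ (write $q\xrightarrow{\sigma}q'$), equivariant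 $F_A\subseteq Q$ of final states, such that (a) if $q\xrightarrow{\mathord{|}a}q'$ and $\langle a\rangle q'=\langle b\rangle q''$ then $q\xrightarrow{\mathord{|}b}q''$; (b) for each $q$ the sets $\{(a,q'):q\xrightarrow{a}q'\}$ and $\{\langle a\rangle q':q\xrightarrow{\mathord{|}a}q'\}$ are finite. $q$ accepts $w=\sigma_1\cdots\sigma_n$ if there is a run $q\xrightarrow{\sigma_1}q_1\cdots\xrightarrow{\sigma_n}q_n$ with $q_n$ final; the accepted bar language is $\{[w]_\alpha:q\text{ accepts }w\}$. *)

(* Defs.v *)
From Stdlib Require Import List Arith Lia.
Import ListNotations.

Definition name := nat.

Record perm := Perm {
  pf : name -> name;
  pg : name -> name;
  pfg : forall a, pf (pg a) = a;
  pgf : forall a, pg (pf a) = a;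
  pfin : exists l : list name, forall a, ~ In a l -> pf a = a }.

Definition pid : perm.
Proof. refine (Perm (fun a => a) (fun a => a) _ _ _); auto. exists []; auto. Defined.

Definition pinv (p : perm) : perm.
Proof.
  refine (Perm (pg p) (pf p) (pgf p) (pfg p) _).
  destruct (pfin p) as [l Hl]. exists l. intros a Ha.
  rewrite <- (Hl a Ha) at 1. apply pgf.
Defined.

Definition pcomp (p q : perm) : perm.
Proof.
  refine (Perm (fun a => pf p (pf q a)) (fun a => pg q (pg p a)) _ _ _).
  - intro a. rewrite pfg. apply pfg.
  - intro a. rewrite pgf. apply pgf.
  - destruct (pfin p) as [l1 H1], (pfin q) as [l2 H2]. exists (l1 ++ l2).
    intros a Ha. rewrite H2, H1; auto; intro; apply Ha; apply in_or_app; auto.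
Defined.

Definition swap_fun (a b c : name) : name :=
  if Nat.eqb c a then b else if Nat.eqb c b then a else c.

Lemma swap_fun_invol a b c : swap_fun a b (swap_fun a b c) = c.
Proof.
  unfold swap_fun.
  destruct (Nat.eqb_spec c a) as [->|Hca].
  - destruct (Nat.eqb_spec b a) as [->|Hba]; [reflexivity|].
    destruct (Nat.eqb_spec b b); [reflexivity|congruence].
  - destruct (Nat.eqb_spec c b) as [->|Hcb].
    + destruct (Nat.eqb_spec a a); [reflexivity|congruence].
    + destruct (Nat.eqb_spec c a); [congruence|].
      destruct (Nat.eqb_spec c b); [congruence|reflexivity].
Qed.

Definition tr (a b : name) : perm.
Proof.
  refine (Perm (swap_fun a b) (swap_fun a b) (swap_fun_invol a b) (swap_fun_invol a b) _).
  exists [a; b]. intros c Hc. unfold swap_fun.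
  destruct (Nat.eqb_spec c a); [subst; simpl in Hc; tauto|].
  destruct (Nat.eqb_spec c b); [subst; simpl in Hc; tauto|]. reflexivity.
Defined.

Definition supports {X : Type} (act : perm -> X -> X) (l : list name) (x : X) : Prop :=
  forall p : perm, (forall a, In a l -> pf p a = a) -> act p x = x.

(* a is fresh for x iff a is not in the least support of x, i.e. some finite
   support of x avoids a *)
Definition fresh {X : Type} (act : perm -> X -> X) (a : name) (x : X) : Prop :=
  exists l, supports act l x /\ ~ In a l.

Definition abs_eq {X : Type} (act : perm -> X -> X) (a : name) (x : X) (b : name) (y : X) : Prop :=
  exists c, c <> a /\ c <> b /\ fresh act c x /\ fresh act c y /\
            act (tr a c) x = act (tr b c) y.

Record nomset := NomSet {
  ncar :> Type;
  nact : perm -> ncar -> ncar;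
  nact_id : forall x, nact pid x = x;
  nact_comp : forall p q x, nact p (nact q x) = nact (pcomp p q) x;
  nfin : forall x, exists l, supports nact l x }.

Definition orbit_finite (X : nomset) : Prop :=
  exists l : list X, forall x : X, exists y p, In y l /\ x = nact X p y.

Definition setact (X : nomset) (p : perm) (S : X -> Prop) : X -> Prop :=
  fun x => S (nact X (pinv p) x).

(* uniformly finitely supported subsets: a single finite set supports all
   elements (equivalently, the union of their least supports is finite) *)
Definition ufs (X : nomset) (S : X -> Prop) : Prop :=
  exists l, forall x, S x -> supports (nact X) l x.

Inductive letter := Plain (a : name) | Bar (a : name).
Definition word := list letter.

Definition letter_name (s : letter) : name := match s with Plain a => a | Bar a => a end.
Definition lact (p : perm) (s : letter) : letter :=
  match s with Plain a => Plain (pf p a) | Bar a => Bar (pf p a) end.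
Definition wact (p : perm) (w : word) : word := map (lact p) w.

(* names occurring in w = least support of w *)
Definition wfresh (b : name) (w : word) : Prop := ~ In b (map letter_name w).

Definition abs_word_eq (a : name) (v : word) (b : name) (w : word) : Prop :=
  (a = b /\ v = w) \/ (wfresh b v /\ wact (tr a b) v = w).

Inductive alpha : word -> word -> Prop :=
| alpha_refl w : alpha w w
| alpha_sym v w : alpha v w -> alpha w v
| alpha_trans u v w : alpha u v -> alpha v w -> alpha u w
| alpha_step x a v b w : abs_word_eq a v b w ->
    alpha (x ++ Bar a :: v) (x ++ Bar b :: w).

(* A set of alpha-classes of bar strings is represented by the alpha-saturated
   set of bar strings it covers. *)
Definition lang := word -> Prop.
Definition langact (p : perm) (L : lang) : lang := fun w => L (wact (pinv p) w).
Definition alpha_closed (L : lang) : Prop := forall v w, alpha v w -> L v -> L w.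
Definition fs_bar_lang (L : lang) : Prop :=
  alpha_closed L /\ exists l, supports langact l L.

Definition is_RNNA (Q : nomset) (R : Q -> letter -> Q -> Prop) (F : Q -> Prop) : Prop :=
  orbit_finite Q /\
  (forall p q s q', R q s q' -> R (nact Q p q) (lact p s) (nact Q p q')) /\
  (forall p q, F q -> F (nact Q p q)) /\
  (forall q a q' b q'', R q (Bar a) q' -> abs_eq (nact Q) a q' b q'' -> R q (Bar b) q'') /\
  (forall q, exists l : list (name * Q), forall a q', R q (Plain a) q' -> In (a, q') l) /\
  (forall q, exists l : list (name * Q), forall b q'', R q (Bar b) q'' ->
       exists a q', In (a, q') l /\ abs_eq (nact Q) a q' b q'').

Fixpoint accepts {Q : nomset} (R : Q -> letter -> Q -> Prop) (F : Q -> Prop)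
    (q : Q) (w : word) : Prop :=
  match w with
  | [] => F q
  | s :: v => exists q', R q s q' /\ accepts R F q' v
  end.

Definition bar_language {Q : nomset} (R : Q -> letter -> Q -> Prop) (F : Q -> Prop)
    (q : Q) : lang :=
  fun w => exists v, alpha v w /\ accepts R F q v.

(* ---------- Coalgebra homomorphism (P_ufs Q, c#) -> (P_fs(bar/=a), tau) ----------
   h is an equivariant map P_ufs Q -> P_fs(bar strings/=alpha) with
   tau o h = G h o c#, written componentwise for G X = 2 x X^A x [A]X. *)
Definition succ_set {Q : nomset} (R : Q -> letter -> Q -> Prop) (S : Q -> Prop)
    (s : letter) : Q -> Prop :=
  fun q' => exists q, S q /\ R q s q'.

Definition is_coalg_hom (Q : nomset) (R : Q -> letter -> Q -> Prop) (F : Q -> Prop)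
    (h : (Q -> Prop) -> lang) : Prop :=
  (forall S, ufs Q S -> fs_bar_lang (h S)) /\
  (forall p S, ufs Q S -> h (setact Q p S) = langact p (h S)) /\
  (forall S, ufs Q S -> (h S [] <-> exists q, S q /\ F q)) /\
  (forall S a, ufs Q S ->
     (fun w => h S (Plain a :: w)) = h (succ_set R S (Plain a))) /\
  (forall S a b, ufs Q S -> fresh langact a (h S) -> fresh (setact Q) b S ->
     abs_eq langact a (fun w => h S (Bar a :: w)) b (h (succ_set R S (Bar b)))).

(* Main.v *)
Require Import Defs.
From Stdlib Require Import List Arith Lia FunctionalExtensionality PropExtensionality Classical.
Import ListNotations.

Lemma fresh_name (l : list name) : exists d, ~ In d l.
Proof.
  exists (S (list_sum l)). intro H.
  assert (H0 : forall x, In x l -> x <= list_sum l).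
  { clear H. induction l as [|y l IH]; simpl; intros x Hx; [contradiction|].
    destruct Hx as [->|Hx]; [lia|]. specialize (IH x Hx). lia. }
  specialize (H0 _ H). lia.
Qed.

Lemma swap_l a b : swap_fun a b a = b.
Proof. unfold swap_fun. rewrite Nat.eqb_refl. reflexivity. Qed.
Lemma swap_r a b : swap_fun a b b = a.
Proof. unfold swap_fun. destruct (Nat.eqb_spec b a); subst; auto. rewrite Nat.eqb_refl; auto. Qed.
Lemma swap_o a b c : c <> a -> c <> b -> swap_fun a b c = c.
Proof. unfold swap_fun. intros. destruct (Nat.eqb_spec c a); [congruence|].
  destruct (Nat.eqb_spec c b); congruence. Qed.
Lemma swap_sym a b c : swap_fun a b c = swap_fun b a c.
Proof. unfold swap_fun. destruct (Nat.eqb_spec c a), (Nat.eqb_spec c b); subst; try congruence; reflexivity. Qed.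

Lemma pf_tr a b n : pf (tr a b) n = swap_fun a b n. Proof. reflexivity. Qed.
Lemma pf_pcomp p q n : pf (pcomp p q) n = pf p (pf q n). Proof. reflexivity. Qed.
Lemma pf_pinv p n : pf (pinv p) n = pg p n. Proof. reflexivity. Qed.

Lemma supports_mono {Y} (act : perm -> Y -> Y) l l' y :
  supports act l y -> (forall n, In n l -> In n l') -> supports act l' y.
Proof. intros H Hi p Hp. apply H. intros; apply Hp; auto. Qed.

Lemma act_fixall (X : nomset) p x : (forall n, pf p n = n) -> nact X p x = x.
Proof. intros H. destruct (nfin X x) as [l Hl]. apply Hl. intros; apply H. Qed.

Lemma act_inv_r (X : nomset) p x : nact X p (nact X (pinv p) x) = x.
Proof. rewrite nact_comp. apply act_fixall. intro n. rewrite pf_pcomp, pf_pinv. apply pfg. Qed.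

Lemma act_agree (X : nomset) l x p p' : supports (nact X) l x ->
  (forall n, In n l -> pf p n = pf p' n) -> nact X p x = nact X p' x.
Proof.
  intros Hs Hpp.
  assert (H : nact X (pinv p) (nact X p' x) = x).
  { rewrite nact_comp. apply Hs. intros n Hn. rewrite pf_pcomp, pf_pinv.
    rewrite <- Hpp by exact Hn. apply pgf. }
  rewrite <- H at 1. apply act_inv_r.
Qed.

Lemma tr_invol_act (X : nomset) a b y : nact X (tr a b) (nact X (tr a b) y) = y.
Proof. rewrite nact_comp. apply act_fixall. intro n. rewrite pf_pcomp, !pf_tr. apply swap_fun_invol. Qed.

Lemma supports_act (X : nomset) l x p : supports (nact X) l x ->
  supports (nact X) (map (pf p) l) (nact X p x).
Proof.
  intros Hs r Hr. rewrite nact_comp. apply (act_agree X l). exact Hs.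
  intros n Hn. rewrite pf_pcomp. apply Hr. apply in_map. exact Hn.
Qed.

Lemma supports_remove (X : nomset) l x c : supports (nact X) l x -> fresh (nact X) c x ->
  supports (nact X) (filter (fun n => negb (Nat.eqb n c)) l) x.
Proof.
  intros Hs [l2 [Hs2 Hc2]] p Hp.
  destruct (pfin p) as [lp Hlp].
  destruct (fresh_name (l ++ l2 ++ lp ++ [c])) as [d Hd].
  repeat rewrite in_app_iff in Hd. simpl in Hd.
  assert (Hx : nact X (tr c d) x = x).
  { apply Hs2. intros n Hn. rewrite pf_tr. apply swap_o; intro; subst; tauto. }
  assert (Hq : nact X (tr c d) (nact X p (nact X (tr c d) x)) = x).
  { rewrite !nact_comp. apply Hs. intros n Hn.
    rewrite !pf_pcomp, !pf_tr. destruct (Nat.eq_dec n c) as [->|Hnc].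
    - rewrite swap_l, Hlp by tauto. apply swap_r.
    - assert (n <> d) by (intro; subst; tauto).
      rewrite (swap_o c d n) by auto. rewrite Hp. apply swap_o; auto.
      apply filter_In. split; auto. apply Bool.negb_true_iff, Nat.eqb_neq. auto. }
  apply (f_equal (nact X (tr c d))) in Hq. rewrite tr_invol_act, Hx in Hq. exact Hq.
Qed.

Lemma in_filter_neq n c l : In n (filter (fun m => negb (Nat.eqb m c)) l) -> In n l /\ n <> c.
Proof. intro H. apply filter_In in H as [H1 H2]. split; auto.
  apply Bool.negb_true_iff, Nat.eqb_neq in H2. auto. Qed.

Lemma ufs_fresh (X : nomset) (S : X -> Prop) l e :
  (forall x, S x -> supports (nact X) l x) -> ~ In e l -> fresh (setact X) e S.
Proof.
  intros HS He. exists l. split; [|exact He].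
  intros p Hp. unfold setact. apply functional_extensionality. intro x.
  apply propositional_extensionality. split; intro H.
  - pose proof (HS _ H p Hp) as E. rewrite act_inv_r in E. rewrite E. exact H.
  - pose proof (HS _ H) as Hx. rewrite (Hx (pinv p)). exact H.
    intros n Hn. rewrite pf_pinv. rewrite <- (Hp n Hn) at 1. apply pgf.
Qed.

Lemma abs_eq_unique (X : nomset) a x b y1 y2 :
  abs_eq (nact X) a x b y1 -> abs_eq (nact X) a x b y2 -> y1 = y2.
Proof.
  intros [c [Hca [Hcb [Hcx [Hcy1 E1]]]]] [d [Hda [Hdb [Hdx [Hdy2 E2]]]]].
  assert (Y1 : y1 = nact X (tr b c) (nact X (tr a c) x)) by (rewrite E1, tr_invol_act; reflexivity).
  assert (Y2 : y2 = nact X (tr b d) (nact X (tr a d) x)) by (rewrite E2, tr_invol_act; reflexivity).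
  destruct (Nat.eq_dec a b) as [<-|Hab].
  - rewrite Y1, Y2, !tr_invol_act. reflexivity.
  - assert (Hbx : fresh (nact X) b x).
    { destruct Hcy1 as [l1 [Hl1 Hcl1]].
      assert (Ex : x = nact X (tr a c) (nact X (tr b c) y1)) by (rewrite <- E1, tr_invol_act; reflexivity).
      exists (map (pf (tr a c)) (map (pf (tr b c)) l1)). split.
      - rewrite Ex. apply supports_act, supports_act, Hl1.
      - intro Hin. apply in_map_iff in Hin as [m [Hm Hin]].
        apply in_map_iff in Hin as [n [Hn Hin]]. subst m.
        rewrite !pf_tr in Hm.
        apply (f_equal (swap_fun a c)) in Hm. rewrite swap_fun_invol in Hm.
        rewrite (swap_o a c b) in Hm by auto.
        apply (f_equal (swap_fun b c)) in Hm. rewrite swap_fun_invol, swap_l in Hm.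
        subst n. tauto. }
    destruct (nfin X x) as [l0 Hl0].
    pose (lx := filter (fun n => negb (Nat.eqb n d))
                 (filter (fun n => negb (Nat.eqb n c)) (filter (fun n => negb (Nat.eqb n b)) l0))).
    assert (Hlx : supports (nact X) lx x).
    { apply supports_remove; auto. apply supports_remove; auto. apply supports_remove; auto. }
    rewrite Y1, Y2, !nact_comp. apply (act_agree X lx); auto.
    intros n Hn. apply in_filter_neq in Hn as [Hn Hnd].
    apply in_filter_neq in Hn as [Hn Hnc]. apply in_filter_neq in Hn as [Hn Hnb].
    rewrite !pf_pcomp, !pf_tr.
    destruct (Nat.eq_dec n a) as [->|Hna].
    + rewrite !swap_l, !swap_r. reflexivity.
    + rewrite (swap_o a c n), (swap_o b c n), (swap_o a d n), (swap_o b d n); auto.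
Qed.

Definition good (Q : nomset) (S : Q -> Prop) := exists K : list Q, forall x, S x -> In x K.

Lemma list_collect {A B : Type} (P : A -> B -> Prop) (K : list A) :
  (forall k, In k K -> exists l, forall y, P k y -> In y l) ->
  exists l, forall k y, In k K -> P k y -> In y l.
Proof.
  induction K as [|k K IH]; intros H.
  - exists []. intros k y [].
  - destruct (H k (or_introl eq_refl)) as [l1 H1].
    destruct IH as [l2 H2]. { intros k' Hk'. apply H. right. exact Hk'. }
    exists (l1 ++ l2). intros k' y [<-|Hk'] Hy; apply in_or_app; [left; auto | right; eauto].
Qed.

Lemma good_ufs Q S : good Q S -> ufs Q S.
Proof.
  intros [K HK].
  assert (H : exists l, forall k, In k K -> supports (nact Q) l k).
  { clear HK. induction K as [|k K IH]. exists []. intros k [].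
    destruct IH as [l2 H2]. destruct (nfin Q k) as [l1 H1].
    exists (l1 ++ l2). intros k' [<-|Hk'].
    - eapply supports_mono; eauto. intros n Hn; apply in_or_app; auto.
    - eapply supports_mono; eauto. intros n Hn; apply in_or_app; auto. }
  destruct H as [l Hl]. exists l. intros x Hx. apply Hl, HK, Hx.
Qed.

Lemma good_succ_plain Q R F (HA : is_RNNA Q R F) S a :
  good Q S -> good Q (succ_set R S (Plain a)).
Proof.
  intros [K HK]. destruct HA as [_ [_ [_ [_ [Hfb _]]]]].
  destruct (list_collect (fun k y => R k (Plain a) y) K) as [l Hl].
  { intros k _. destruct (Hfb k) as [lk Hlk]. exists (map snd lk). intros y Hy.
    exact (in_map snd _ _ (Hlk a y Hy)). }
  exists l. intros y [q [Hq Hr]]. eapply Hl; eauto.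
Qed.

Lemma good_succ_bar Q R F (HA : is_RNNA Q R F) S e :
  good Q S -> good Q (succ_set R S (Bar e)).
Proof.
  intros [K HK]. destruct HA as [_ [_ [_ [_ [_ Hfb]]]]].
  destruct (list_collect (fun k y => R k (Bar e) y) K) as [l Hl].
  { intros k _. destruct (Hfb k) as [lk Hlk].
    destruct (list_collect (fun (aq : name * Q) y => abs_eq (nact Q) (fst aq) (snd aq) e y) lk)
      as [l2 H2].
    { intros [a q'] _. destruct (classic (exists y, abs_eq (nact Q) a q' e y)) as [[y0 Hy0]|Hn].
      - exists [y0]. intros y Hy. cbn in Hy. left. eapply abs_eq_unique; eauto.
      - exists []. intros y Hy. exfalso. apply Hn. exists y. exact Hy. }
    exists l2. intros y Hy. destruct (Hlk e y Hy) as [a [q' [Hin Habs]]].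
    apply (H2 (a, q')); auto. }
  exists l. intros y [q [Hq Hr]]. eapply Hl; eauto.
Qed.

Lemma letter_name_lact p s : letter_name (lact p s) = pf p (letter_name s).
Proof. destruct s; reflexivity. Qed.

Lemma wact_inv p u : wact (pinv p) (wact p u) = u.
Proof.
  unfold wact. rewrite map_map. transitivity (map (fun x => x) u); [|apply map_id].
  apply map_ext. intros [a|a]; unfold lact; f_equal; exact (pgf p a).
Qed.


Lemma wact_swap_back d e v : wact (tr e d) (wact (tr d e) v) = v.
Proof.
  unfold wact. rewrite map_map. transitivity (map (fun x => x) v); [|apply map_id].
  apply map_ext. intros [a|a]; unfold lact; f_equal; rewrite !pf_tr, (swap_sym e d);
    apply swap_fun_invol.
Qed.

Lemma wfresh_swap d e v : ~ In e (map letter_name v) -> wfresh d (wact (tr d e) v).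
Proof.
  unfold wfresh, wact. rewrite map_map. intros H Hin.
  apply in_map_iff in Hin as [s [Hs Hin]]. rewrite letter_name_lact, pf_tr in Hs.
  apply (f_equal (swap_fun d e)) in Hs. rewrite swap_fun_invol, swap_l in Hs.
  apply H. rewrite <- Hs. apply in_map. exact Hin.
Qed.

Lemma alpha_cons s v w : alpha v w -> alpha (s :: v) (s :: w).
Proof.
  induction 1.
  - apply alpha_refl.
  - apply alpha_sym; auto.
  - eapply alpha_trans; eauto.
  - apply (alpha_step (s :: x)). exact H.
Qed.

Lemma accepts_equiv (Q : nomset) R F
  (HR : forall p q s q', R q s q' -> R (nact Q p q) (lact p s) (nact Q p q'))
  (HF : forall p q, F q -> F (nact Q p q)) p :
  forall v q, accepts R F q v -> accepts R F (nact Q p q) (wact p v).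
Proof.
  induction v as [|s v IH]; simpl; intros q H.
  - apply HF; auto.
  - destruct H as [q' [H1 H2]]. exists (nact Q p q'). split; auto.
Qed.

Lemma bar_step Q R F h (Hh : is_coalg_hom Q R F h) S e lh lS :
  (forall x, S x -> supports (nact Q) lS x) -> supports langact lh (h S) ->
  ~ In e lh -> ~ In e lS ->
  forall u, h S (Bar e :: u) = h (succ_set R S (Bar e)) u.
Proof.
  intros HS Hlh Hel HeS u.
  destruct Hh as [_ [_ [_ [_ H3]]]].
  assert (Hu : ufs Q S) by (exists lS; exact HS).
  destruct (H3 S e e Hu (ex_intro _ lh (conj Hlh Hel)) (ufs_fresh Q S lS e HS HeS))
    as [c [_ [_ [_ [_ E]]]]].
  apply (f_equal (fun L => L (wact (tr e c) u))) in E.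
  unfold langact in E. cbv beta in E. rewrite wact_inv in E. exact E.
Qed.

Lemma sound Q R F h (HA : is_RNNA Q R F) (Hh : is_coalg_hom Q R F h) :
  forall n S w, good Q S -> length w = n -> h S w ->
    exists q, S q /\ exists v, alpha v w /\ accepts R F q v.
Proof.
  pose proof Hh as [Hfs [Heqv [H1 [H2 H3]]]].
  induction n as [|n IH]; intros S w HS Hlen Hw.
  - destruct w; [|discriminate]. apply H1 in Hw as [q [Hq Hf]]; [|apply good_ufs; auto].
    exists q. split; auto. exists []. split. apply alpha_refl. exact Hf.
  - destruct w as [|s w']; [discriminate|]. simpl in Hlen. injection Hlen as Hlen.
    destruct s as [a|b].
    + pose proof (f_equal (fun f => f w') (H2 S a (good_ufs _ _ HS))) as E. cbv beta in E.
      rewrite E in Hw.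
      destruct (IH _ _ (good_succ_plain Q R F HA S a HS) Hlen Hw)
        as [q'' [[q [Hq Hr]] [v [Hv Hacc]]]].
      exists q; split; auto. exists (Plain a :: v). split. apply alpha_cons; auto.
      simpl. exists q''. auto.
    + destruct (good_ufs _ _ HS) as [lS HlS].
      destruct (Hfs S (good_ufs _ _ HS)) as [Hac [lh Hlh]].
      destruct (fresh_name (lh ++ lS ++ map letter_name w' ++ [b])) as [e He].
      rewrite !in_app_iff in He; simpl in He.
      set (u := wact (tr b e) w').
      assert (Hal : alpha (Bar b :: w') (Bar e :: u)).
      { apply (alpha_step [] b w' e u). right. split. unfold wfresh. tauto. reflexivity. }
      assert (Hw2 : h S (Bar e :: u)) by (apply (Hac _ _ Hal); exact Hw).
      rewrite (bar_step Q R F h Hh S e lh lS HlS Hlh) in Hw2 by tauto.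
      assert (Hlu : length u = n) by (unfold u, wact; rewrite length_map; auto).
      destruct (IH _ u (good_succ_bar Q R F HA S e HS) Hlu Hw2)
        as [q'' [[q [Hq Hr]] [v [Hv Hacc]]]].
      exists q; split; auto. exists (Bar e :: v). split.
      * eapply alpha_trans. apply alpha_cons; exact Hv. apply alpha_sym; exact Hal.
      * simpl. exists q''; auto.
Qed.

Lemma complete Q R F h (HA : is_RNNA Q R F) (Hh : is_coalg_hom Q R F h) :
  forall n S q v, good Q S -> S q -> length v = n -> accepts R F q v -> h S v.
Proof.
  pose proof Hh as [Hfs [Heqv [H1 [H2 H3]]]].
  pose proof HA as [_ [HR [HF [HRa _]]]].
  induction n as [|n IH]; intros S q v HS Hq Hlen Hacc.
  - destruct v; [|discriminate]. simpl in Hacc. apply H1. apply good_ufs; auto. exists q; auto.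
  - destruct v as [|s v1]; [discriminate|]. simpl in Hlen. injection Hlen as Hlen.
    simpl in Hacc. destruct Hacc as [q1 [Hr Hacc]].
    destruct s as [a|d].
    + pose proof (f_equal (fun f => f v1) (H2 S a (good_ufs _ _ HS))) as E. cbv beta in E.
      rewrite E. apply (IH _ q1 v1 (good_succ_plain Q R F HA S a HS)); auto. exists q; auto.
    + destruct (good_ufs _ _ HS) as [lS HlS].
      destruct (Hfs S (good_ufs _ _ HS)) as [Hac [lh Hlh]].
      destruct (nfin Q q1) as [l1 Hl1].
      destruct (fresh_name (lh ++ lS ++ l1 ++ map letter_name v1 ++ [d])) as [e He].
      rewrite !in_app_iff in He; simpl in He.
      set (q1' := nact Q (tr d e) q1). set (v1' := wact (tr d e) v1).
      assert (Hr' : R q (Bar e) q1').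
      { apply (HRa q d q1 e q1' Hr).
        destruct (fresh_name (l1 ++ [d; e])) as [c Hc]. rewrite in_app_iff in Hc; simpl in Hc.
        exists c. split; [intro; subst; tauto|]. split; [intro; subst; tauto|].
        split. { exists l1; split; auto; tauto. }
        split.
        { exists (map (pf (tr d e)) l1). split. apply supports_act; auto.
          intro Hin. apply in_map_iff in Hin as [m [Hm Hin]]. rewrite pf_tr in Hm.
          destruct (Nat.eq_dec m d) as [->|Hmd]; [rewrite swap_l in Hm; subst; tauto|].
          destruct (Nat.eq_dec m e) as [->|Hme]; [rewrite swap_r in Hm; subst; tauto|].
          rewrite swap_o in Hm; auto. subst; tauto. }
        unfold q1'. rewrite nact_comp. apply (act_agree Q l1); auto. intros m Hm.
        rewrite pf_pcomp, !pf_tr.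
        destruct (Nat.eq_dec m d) as [->|Hmd].
        - rewrite !swap_l. reflexivity.
        - assert (m <> e) by (intro; subst; tauto). assert (m <> c) by (intro; subst; tauto).
          rewrite (swap_o d c m), (swap_o d e m), (swap_o e c m); auto. }
      assert (Hacc' : accepts R F q1' v1') by (apply accepts_equiv; auto).
      assert (Hs' : h (succ_set R S (Bar e)) v1').
      { apply (IH _ q1' v1' (good_succ_bar Q R F HA S e HS)).
        - exists q; auto.
        - unfold v1', wact; rewrite length_map; auto.
        - exact Hacc'. }
      rewrite <- (bar_step Q R F h Hh S e lh lS HlS Hlh) in Hs' by tauto.
      apply (Hac (Bar e :: v1') (Bar d :: v1)); auto.
      apply (alpha_step [] e v1' d v1). right. split.
      * apply wfresh_swap. tauto.
      * apply wact_swap_back.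
Qed.

Theorem corollary4p22 (Q : nomset) (R : Q -> letter -> Q -> Prop) (F : Q -> Prop)
  (HA : is_RNNA Q R F) (h : (Q -> Prop) -> lang) (Hh : is_coalg_hom Q R F h) :
  forall q : Q, h (fun x => x = q) = bar_language R F q.
Proof.
  intro q. assert (Hg : good Q (fun x => x = q)) by (exists [q]; intros x ->; left; reflexivity).
  apply functional_extensionality; intro w. apply propositional_extensionality. split.
  - intro Hw. destruct (sound Q R F h HA Hh (length w) _ w Hg eq_refl Hw)
      as [q' [-> [v [Hv Ha]]]]. exists v; auto.
  - intros [v [Hv Ha]]. pose proof Hh as [Hfs _]. destruct (Hfs _ (good_ufs _ _ Hg)) as [Hac _].
    apply (Hac v w Hv). exact (complete Q R F h HA Hh (length v) _ q v Hg eq_refl eq_refl Ha).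
Qed.
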